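(* Let $\varrho,\widetilde{\varrho}:\mathbb{R}\to\mathbb{R}$ with $\varrho$ continuous, let $d\in\mathbb{N}^+$, $a<b$, $f:[a,b]^d\to\mathbb{R}$, and $\varepsilon>0$. Suppose (i) there is a function $\phi_\varrho$ generated by a $\varrho$-activated network with width $N$ and depth $L$ such that $|\phi_\varrho(\boldsymbol{x})-f(\boldsymbol{x})|<\varepsilon/2$ for all $\boldsymbol{x}\in[a,b]^d$; and (ii) for every $M>0$ and each $\delta\in(0,1)$ there exists a function $\varrho_\delta$ generated by a $\widetilde{\varrho}$-activated network with width $\widetilde{N}$ and depth $\widetilde{L}$ such that $\varrho_\delta\to\varrho$ uniformly on $[-M,M]$ as $\delta\to0^+$. Then there exists a function $\phi$ generated by a $\widetilde{\varrho}$-activated network with width $N\widetilde{N}$ and depth $L\widetilde{L}$ such that $|\phi(\boldsymbol{x})-f(\boldsymbol{x})|<\varepsilon$ for all $\boldsymbol{x}\in[a,b]^d$.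
   Context: For an activation $\eta:\mathbb{R}\to\mathbb{R}$ (applied to vectors entrywise), a function generated by an $\eta$-activated network with input dimension $n$, width $N$ and depth $L$ is a function of the form $\mathcal{L}_{\ell}\circ\eta\circ\mathcal{L}_{\ell-1}\circ\cdots\circ\eta\circ\mathcal{L}_0$ with $\ell\le L$ hidden layers, where the $\mathcal{L}_i$ are affine maps, $\mathcal{L}_0$ has domain $\mathbb{R}^n$, $\mathcal{L}_\ell$ has codomain $\mathbb{R}$, and every hidden layer has at most $N$ neurons. *)

(* Defs.v *)
From HB Require Import structures.
From mathcomp Require Import all_boot all_order all_algebra.
From mathcomp Require Import all_classical all_reals all_analysis.
Unset Printing Implicit Defensive.
Import Order.TTheory GRing.Theory Num.Theory.
Local Open Scope ring_scope.

Section NN.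
Variable R : realType.

(* [feat eta n N l k h]: h : R^n -> R^k is  eta o L_{l-1} o ... o eta o L_0,
   with l hidden layers, each of at most N neurons (k is the last width;
   for l = 0, h is the identity and k = n). *)
Inductive feat (eta : R -> R) (n N : nat) :
    nat -> forall k : nat, ('rV[R]_n -> 'rV[R]_k) -> Prop :=
| feat0 : feat eta n N 0 n (fun x => x)
| featS (l k k' : nat) (h : 'rV[R]_n -> 'rV[R]_k)
        (W : 'M[R]_(k, k')) (b : 'rV[R]_k') :
    feat eta n N l k h -> (k' <= N)%N ->
    feat eta n N l.+1 k' (fun x => map_mx eta (h x *m W + b)).

Definition nn_gen (eta : R -> R) (n N L : nat) (f : 'rV[R]_n -> R) : Prop :=
  exists (l k : nat) (h : 'rV[R]_n -> 'rV[R]_k) (W : 'M[R]_(k, 1)) (b : 'rV[R]_1),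
    (l <= L)%N /\ feat eta n N l k h /\
    forall x, f x = (h x *m W + b) ord0 ord0.

Definition nn_gen1 (eta : R -> R) (N L : nat) (g : R -> R) : Prop :=
  nn_gen eta 1 N L (fun v : 'rV[R]_1 => g (v ord0 ord0)).

Definition cube (d : nat) (a b : R) : set 'rV[R]_d :=
  [set x | forall i : 'I_d, a <= x ord0 i <= b].

End NN.
Arguments nn_gen {R} eta n N L f.
Arguments nn_gen1 {R} eta N L g.
Arguments cube {R} d a b.

(* Main.v *)
Require Import Defs.
From HB Require Import structures.
From mathcomp Require Import all_boot all_order all_algebra.
From mathcomp Require Import all_classical all_reals all_analysis.
From mathcomp Require Import lra.
Import Order.TTheory GRing.Theory Num.Theory numFieldNormedType.Exports.
Local Open Scope ring_scope.

Lemma sum_pair (R : ringType) p m (A : 'I_p -> 'I_m -> R) i :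
 \sum_(c < #|{: 'I_p * 'I_m}|) ((enum_val c).1 == i)%:R * A (enum_val c).1 (enum_val c).2 = \sum_(j < m) A i j.
Proof.
rewrite -(big_enum_val (fun c => ((c.1 == i)%:R * A c.1 c.2))) /=.
rewrite -(pair_bigA _ (fun i' j => ((i' == i)%:R * A i' j))) /=.
rewrite (bigD1 i) //= [X in _ + X]big1 ?addr0.
  by apply: eq_bigr => j _; rewrite eqxx mul1r.
by move=> i' /negbTE -> ; apply: big1 => j _; rewrite mul0r.
Qed.

Section Net.
Variable R : realType.
Variable eta : R -> R.

Definition AF (n K D p : nat) (F : 'rV[R]_n -> 'rV[R]_p) : Prop :=
  exists (l k : nat) (h : 'rV[R]_n -> 'rV[R]_k) (W : 'M[R]_(k, p)) (b : 'rV[R]_p),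
    (l <= D)%N /\ feat R eta n K l k h /\ forall x, F x = h x *m W + b.

Lemma feat_widen n K K' l k h : feat R eta n K l k h -> (K <= K')%N -> feat R eta n K' l k h.
Proof.
move=> H KK; elim: H => [|l0 k0 k' h0 W b _ IH hk]; first exact: feat0.
apply: featS => //; exact: leq_trans hk KK.
Qed.

Lemma AF_mono n K D D' p F : AF n K D p F -> (D <= D')%N -> AF n K D' p F.
Proof.
case=> l [k [h [W [b [hl [hf hF]]]]]] DD.
by exists l, k, h, W, b; split; [exact: leq_trans hl DD| split].
Qed.

Lemma AF_id n K : AF n K 0 n (fun x => x).
Proof.
exists 0%N, n, (fun x => x), 1%:M, 0; split => //; split; first exact: feat0.
by move=> x; rewrite mulmx1 addr0.
Qed.

Lemma AF_affine n K D p q F (W : 'M[R]_(p, q)) b :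
  AF n K D p F -> AF n K D q (fun x => F x *m W + b).
Proof.
case=> l [k [h [W0 [b0 [hl [hf hF]]]]]].
exists l, k, h, (W0 *m W), (b0 *m W + b); split => //; split => // x.
by rewrite hF mulmxDl mulmxA addrA.
Qed.

Lemma AF_feat n K D p F : AF n K D p F -> 
  forall q (W : 'M[R]_(p, q)) b, (q <= K)%N ->
  AF n K D.+1 q (fun x => map_mx eta (F x *m W + b)).
Proof.
case=> l [k [h [W0 [b0 [hl [hf hF]]]]]] q W b qK.
exists l.+1, q, (fun x => map_mx eta (h x *m (W0 *m W) + (b0 *m W + b))), 1%:M, 0.
split => //; split; first exact: featS.
by move=> x; rewrite mulmx1 addr0 hF mulmxDl mulmxA addrA.
Qed.

Definition sc (t : R) : 'rV[R]_1 := const_mx t.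

Lemma AF_blocks n K D p F : AF n K D p F -> forall Nt, (p * Nt <= K)%N ->
  forall j m G, feat R eta 1 Nt j m G ->
  AF n K (D + j) #|{: 'I_p * 'I_m}|
    (fun x => \row_c G (sc (F x 0 (enum_val c).1)) 0 (enum_val c).2).
Proof.
move=> hF Nt hK j m G hG; elim: hG => [|l k k' h W b hh IH hk].
  rewrite addn0.
  have -> : (fun x => \row_c (sc (F x 0 (enum_val c).1)) 0 (enum_val c).2)
     = (fun x => F x *m (\matrix_(i < p, c < #|{: 'I_p * 'I_1}|) ((enum_val c).1 == i)%:R) + 0).
    apply: funext => x; apply/rowP => c; rewrite !mxE addr0.
    rewrite (bigD1 (enum_val c).1) //= mxE eqxx mulr1 big1 ?addr0 //.
    by move=> i /negbTE; rewrite mxE eq_sym => ->; rewrite mulr0.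
  exact: AF_affine.
have -> : (fun x => \row_c (map_mx eta (h (sc (F x 0 (enum_val c).1)) *m W + b)) 0 (enum_val c).2)
   = (fun x => map_mx eta ((\row_c h (sc (F x 0 (enum_val c).1)) 0 (enum_val c).2) *m
        (\matrix_(c < #|{: 'I_p * 'I_k}|, c' < #|{: 'I_p * 'I_k'}|) (((enum_val c).1 == (enum_val c').1)%:R * W (enum_val c).2 (enum_val c').2))
        + \row_(c' < #|{: 'I_p * 'I_k'}|) b 0 (enum_val c').2)).
  apply: funext => x; apply/rowP => c'; rewrite !mxE.
  congr (eta (_ + _)).
  rewrite -(@sum_pair R p k (fun i j => h (sc (F x 0 i)) 0 j * W j (enum_val c').2) (enum_val c').1).
  apply: eq_bigr => c _; rewrite !mxE.
  by rewrite mulrCA.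
rewrite addnS; apply: AF_feat => //.
rewrite card_prod !card_ord; apply: leq_trans hK; exact: leq_mul.
Qed.

Lemma AF_map n K D p F Nt Lt (g : R -> R) : AF n K D p F -> (p * Nt <= K)%N ->
  nn_gen1 eta Nt Lt g -> AF n K (D + Lt) p (fun x => map_mx g (F x)).
Proof.
move=> hF hK [j [m [G [W [b [hj [hG hg]]]]]]].
have := @AF_blocks n K D p F hF Nt hK j m G hG.
move=> /(@AF_affine n K (D + j) _ p _
   (\matrix_(c < #|{: 'I_p * 'I_m}|, i < p) (((enum_val c).1 == i)%:R * W (enum_val c).2 0))
   (const_mx (b 0 0))).
move=> /AF_mono => /(_ (D + Lt)%N); rewrite leq_add2l => /(_ hj).
congr AF; apply: funext => x; apply/rowP => i; rewrite !mxE.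
have := hg (sc (F x 0 i)); rewrite /sc mxE => ->; rewrite !mxE; congr (_ + _).
rewrite -(@sum_pair R p m (fun i j => G (sc (F x 0 i)) 0 j * W j 0) i).
by apply: eq_bigr => c _; rewrite !mxE mulrCA.
Qed.
End Net.
Arguments AF {R} eta n K D p F.
Arguments AF_affine {R eta n K D p q F} W b.
Arguments AF_map {R eta n K D p F Nt Lt g}.
Arguments AF_id {R eta n K}.
Lemma bnd_cont {R : realType} {rho : R -> R} : continuous rho -> forall M : R,
  exists B : R, 0 <= B /\ forall t, `|t| <= M -> `|rho t| <= B.
Proof.
move=> hc M.
have hM : - `|M| <= `|M| by have := normr_ge0 M; lra.
have [c _ hcm] := @EVT_max R (fun t => `|rho t|) (- `|M|) `|M| hM
   (continuous_subspaceT (fun x => continuous_comp (hc x) (@norm_continuous _ _ _))).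
exists `|rho c|; split => // t ht; apply: hcm.
rewrite in_itv /= -ler_norml; apply: (le_trans ht); exact: ler_norm.
Qed.

Definition SW {R : realType} {k q : nat} (W : 'M[R]_(k, q)) := \sum_i \sum_j `|W i j|.

Lemma lin_bound {R : realType} {k q : nat} (u : 'rV[R]_k) (W : 'M[R]_(k, q)) (c : R) (j : 'I_q) :
  0 <= c -> (forall i, `|u 0 i| <= c) -> `|(u *m W) 0 j| <= c * SW W.
Proof.
move=> c0 hu; rewrite mxE.
apply: (le_trans (ler_norm_sum _ _ _)).
rewrite /SW mulr_sumr; apply: ler_sum => i _.
rewrite normrM; apply: (le_trans (ler_wpM2r (normr_ge0 _) (hu i))).
apply: ler_wpM2l => //.
by rewrite (bigD1 j) //= lerDl sumr_ge0.
Qed.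

Lemma SW_ge0 {R : realType} {k q : nat} (W : 'M[R]_(k, q)) : 0 <= SW W.
Proof. by apply: sumr_ge0 => i _; apply: sumr_ge0. Qed.

Section UC.
Local Open Scope classical_set_scope.
Lemma unif_cont {R : realType} {rho : R -> R} : continuous rho -> forall M e : R, 0 < e ->
  exists2 eta, 0 < eta & forall z z', `|z| <= M -> `|z - z'| < eta -> `|rho z - rho z'| < e.
Proof.
move=> hc M e e0.
have cK : compact (`[-M, M]%classic : set R) := @segment_compact _ _ _.
have := (proj1 (compact_near_coveringP _) cK) R (0^'+)%R
  (fun eta z => forall z', `|z - z'| < eta -> `|rho z - rho z'| < e) _.
have H : (forall x : R, `[-M, M]%classic x ->
   \forall x' \near x & i \near (0^'+)%R, forall z', `|x' - z'| < i -> `|rho x' - rho z'| < e).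
  move=> x _.
  have /cvgrPdist_lt/(_ (e/2)) := hc x.
  case/(_ _)/wrap; first by rewrite divr_gt0.
  case=> r /= r0 Hr.
  have r20 : 0 < r / 2 by rewrite divr_gt0.
  exists (ball x (r/2), [set i | 0 < i < r/2]).
    split; first by apply: nbhsx_ballx.
    exists (r/2); first by [].
    move=> y /= hy y0; rewrite y0 /=.
    by move: hy; rewrite /ball /= sub0r normrN gtr0_norm.
  case=> x' i /= [hx' /andP[i0 ir]] z' hz.
  move: hx'; rewrite /ball /= => hx'.
  have h1 := Hr x' (lt_le_trans hx' _).
  have h2 : `|rho x - rho z'| < e / 2.
    apply: Hr; rewrite /ball /=.
    rewrite (_ : x - z' = (x - x') + (x' - z')); last by rewrite addrA subrK.
    apply: (le_lt_trans (ler_normD _ _)).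
    by rewrite [r]splitr ltrD // (lt_trans hz).
  rewrite (_ : rho x' - rho z' = - (rho x - rho x') + (rho x - rho z')); last first.
    by rewrite opprB addrA subrK.
  apply: (le_lt_trans (ler_normD _ _)).
  rewrite normrN [e]splitr ltrD //; apply: h1.
  by rewrite ler_pdivrMr // ler_pMr // ler1n.
move=> /(_ _ H) [r /= r0 Hr].
exists (r/2); first by rewrite divr_gt0.
move=> z z' hz hzz'; apply: (Hr (r/2)) => //=.
- by rewrite /ball /= sub0r normrN gtr0_norm ?divr_gt0 // ltr_pdivrMr // ltr_pMr // ltr1n.
- by rewrite divr_gt0.
- by rewrite /= in_itv /= -ler_norml.
Qed.
End UC.


Lemma tri {R : realType} (X Y Z e : R) : `|X - Z| < e / 2 -> `|Z - Y| < e / 2 -> `|X - Y| < e.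
Proof.
move=> h1 h2; have := ler_normD (X - Z) (Z - Y); rewrite addrA subrK; lra.
Qed.

Section Approx.
Variable R : realType.
Variables (rho rt : R -> R) (d : nat) (a b : R) (N Nt Lt : nat).
Hypothesis hc : continuous rho.
Hypothesis hii : forall M : R, 0 < M ->
     exists rd : R -> R -> R,
       (forall delta : R, 0 < delta < 1 -> nn_gen1 rt Nt Lt (rd delta)) /\
       (forall e : R, 0 < e -> exists delta0 : R, 0 < delta0 /\
          forall delta : R, 0 < delta < 1 -> delta < delta0 ->
            forall t : R, `|t| <= M -> `|rd delta t - rho t| < e).

Lemma approx l0 k0 h0 : feat R rho d N l0 k0 h0 ->
  exists B : R, 0 <= B /\ (forall x, cube d a b x -> forall i, `|h0 x 0 i| <= B) /\
  forall e : R, 0 < e -> exists g, AF rt d (N * Nt) (l0 * Lt) k0 g /\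
    forall x, cube d a b x -> forall i, `|g x 0 i - h0 x 0 i| < e.
Proof.
elim=> [|l k k' h W bb hh [B [B0 [hB IH]]] hk].
  exists (`|a| + `|b|); split; first by have := normr_ge0 a; have := normr_ge0 b; lra.
  split.
    move=> x hx i; have /andP[h1 h2] := hx i.
    rewrite ler_norml; have := ler_norm b; have := ler_norm (- a); rewrite normrN.
    have := normr_ge0 a; have := normr_ge0 b; lra.
  move=> e e0; exists (fun x => x); split; first by rewrite mul0n; exact: AF_id.
  by move=> x _ i; rewrite subrr normr0.
set M0 := B * SW W + \sum_j `|bb 0 j|.
have SW0 := SW_ge0 W.
have Sb0 : 0 <= \sum_j `|bb 0 j| by apply: sumr_ge0.
have M00 : 0 <= M0 by rewrite addr_ge0 // mulr_ge0.
have hz : forall x, cube d a b x -> forall i, `|(h x *m W + bb) 0 i| <= M0.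
  move=> x hx i; rewrite mxE; apply: (le_trans (ler_normD _ _)).
  apply: lerD; first exact: lin_bound (hB x hx).
  by rewrite (bigD1 i) //= lerDl sumr_ge0.
have [Br [Br0 hBr]] := bnd_cont hc M0.
exists Br; split => //; split.
  by move=> x hx i; rewrite mxE; apply: hBr; exact: hz.
move=> e e0.
have M0' : 0 < M0 + 1 by lra.
have [rd [hrd hconv]] := hii _ M0'.
have e20 : 0 < e / 2 by rewrite divr_gt0.
have [eta eta0 heta] := unif_cont hc (M0 + 1) (e/2) e20.
have [delta0 [delta00 hd0]] := hconv _ e20.
set delta := Num.min delta0 1 / 2.
have hmin0 : 0 < Num.min delta0 1 by rewrite lt_min delta00 ltr01.
have hd : 0 < delta < 1.
  apply/andP; split; first by rewrite divr_gt0.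
  have : Num.min delta0 1 <= 1 by rewrite ge_min lexx orbT.
  rewrite /delta; lra.
have hdd : delta < delta0.
  have : Num.min delta0 1 <= delta0 by rewrite ge_min lexx.
  rewrite /delta; lra.
set e' := Num.min eta 1 / (SW W + 1).
have hmin1 : 0 < Num.min eta 1 by rewrite lt_min eta0 ltr01.
have e'0 : 0 < e' by rewrite divr_gt0 //; lra.
have [g [hgA hg]] := IH _ e'0.
exists (fun x => map_mx (rd delta) (g x *m W + bb)); split.
  have hK : (k' * Nt <= N * Nt)%N by rewrite leq_mul2r hk orbT.
  have := AF_map (AF_affine W bb hgA) hK (hrd _ hd).
  by rewrite mulSn addnC.
move=> x hx i; rewrite !mxE.
set z' := (g x *m W + bb) 0 i.
set z := (h x *m W + bb) 0 i.
have Ez : z' - z = ((g x - h x) *m W) 0 i.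
  by rewrite /z' /z mulmxBl !mxE; lra.
have hdz : `|z' - z| < Num.min eta 1.
  rewrite Ez; apply: (le_lt_trans (lin_bound (g x - h x) W e' i (ltW e'0) _)).
    by move=> j; rewrite !mxE; apply: ltW; apply: hg.
  rewrite /e' mulrAC ltr_pdivrMr; last by lra.
  by rewrite ltr_pM2l //; lra.
have hdz1 : `|z' - z| < eta by apply: (lt_le_trans hdz); rewrite ge_min lexx.
have hdz2 : `|z' - z| < 1 by apply: (lt_le_trans hdz); rewrite ge_min lexx orbT.
have hzM := hz x hx i.
have hz'M : `|z'| <= M0 + 1.
  have := ler_normD (z' - z) z; rewrite subrK; lra.
have h1 := hd0 delta hd hdd z' hz'M.
have h2 := heta z' z hz'M hdz1.
rewrite -[z]/((h x *m W + bb) 0 i) -[z']/((g x *m W + bb) 0 i) in h1 h2.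
move: h1 h2; rewrite !mxE; exact: tri.
Qed.
End Approx.

Theorem lemma9 (R : realType) (rho rt : R -> R) (d : nat) (a b : R)
    (f : 'rV[R]_d -> R) (eps : R) (N L Nt Lt : nat) :
  continuous rho -> (0 < d)%N -> a < b -> 0 < eps ->
  (exists phi : 'rV[R]_d -> R, nn_gen rho d N L phi /\
     forall x, cube d a b x -> `|phi x - f x| < eps / 2) ->
  (forall M : R, 0 < M ->
     exists rd : R -> R -> R,
       (forall delta : R, 0 < delta < 1 -> nn_gen1 rt Nt Lt (rd delta)) /\
       (forall e : R, 0 < e -> exists delta0 : R, 0 < delta0 /\
          forall delta : R, 0 < delta < 1 -> delta < delta0 ->
            forall t : R, `|t| <= M -> `|rd delta t - rho t| < e)) ->
  exists phi : 'rV[R]_d -> R, nn_gen rt d (N * Nt) (L * Lt) phi /\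
    forall x, cube d a b x -> `|phi x - f x| < eps.
Proof.
move=> hc _ _ eps0 [phi [[l [k [h [W [bb [hl [hf hphi]]]]]]] herr]] hii.
have [B [B0 [hB happ]]] := @approx R rho rt d a b N Nt Lt hc hii _ _ _ hf.
have SW0 := SW_ge0 W.
set e' := (eps / 2) / (SW W + 1).
have e20 : 0 < eps / 2 by rewrite divr_gt0.
have e'0 : 0 < e' by rewrite divr_gt0 //; lra.
have [g [hgA hg]] := happ e' e'0.
have := AF_affine W bb hgA => -[l' [k' [h' [W' [b' [hl' [hf' hF]]]]]]].
exists (fun x => (g x *m W + bb) 0 0); split.
  exists l', k', h', W', b'; split.
    by apply: (leq_trans hl'); rewrite leq_mul2r hl orbT.
  by split => // x; rewrite hF.
move=> x hx.
have e1 : `|(g x *m W + bb) 0 0 - phi x| < eps / 2.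
  rewrite hphi.
  have -> : (g x *m W + bb) 0 0 - (h x *m W + bb) 0 0 = ((g x - h x) *m W) 0 0.
    by rewrite mulmxBl !mxE; lra.
  apply: (le_lt_trans (lin_bound (g x - h x) W e' 0 (ltW e'0) _)).
    by move=> j; rewrite !mxE; apply: ltW; apply: hg.
  rewrite /e' mulrAC ltr_pdivrMr; last by lra.
  by rewrite ltr_pM2l //; lra.
exact: tri e1 (herr x hx).
Qed.
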